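(* Let $A$ be any real $m\times n$ matrix with columns $A_1,\dots,A_n$, let $1\le k<n$, and let $\mathbf{S}$ be a random subset of $\{1,\dots,n\}$ distributed uniformly over all subsets of size $k$. Define $r_{\mathbf{S}}=\mathrm{rank}(A_{\mathbf{S}})$ and $t_{\mathbf{S}}=|\{i\notin\mathbf{S}: A_i\in\mathcal{R}(A_{\mathbf{S}})\}|$. Then $$\mathbb{E}[t_{\mathbf{S}}]\ge\Big(\frac nk-1\Big)\big(k-\mathbb{E}[r_{\mathbf{S}}]\big).$$
   Context: $A_{\mathbf{S}}$ denotes the submatrix of $A$ formed by the columns indexed by $\mathbf{S}$, and $\mathcal{R}(M)$ denotes the column (range) space of a matrix $M$. *)

(* Defs.v *)
From HB Require Import structures.
From mathcomp Require Import all_boot all_order all_algebra.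
Set Implicit Arguments. Unset Strict Implicit. Unset Printing Implicit Defensive.
Import Order.TTheory GRing.Theory Num.Theory.
Local Open Scope ring_scope.

Definition colsubset (R : Type) (m n : nat) (A : 'M[R]_(m, n)) (S : {set 'I_n})
  : 'M[R]_(m, #|S|) :=
  colsub (fun j : 'I_#|S| => enum_val j) A.

Definition in_colspace (F : fieldType) (m p : nat) (v : 'cV[F]_m) (M : 'M[F]_(m, p)) : bool :=
  (v^T <= M^T)%MS.

Definition r_S (F : fieldType) (m n : nat) (A : 'M[F]_(m, n)) (S : {set 'I_n}) : nat :=
  \rank (colsubset A S).

Definition t_S (F : fieldType) (m n : nat) (A : 'M[F]_(m, n)) (S : {set 'I_n}) : nat :=
  #|[set i : 'I_n | (i \notin S) && in_colspace (col i A) (colsubset A S)]|.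

Definition expect_ksub (R : numFieldType) (n k : nat) (f : {set 'I_n} -> nat) : R :=
  (\sum_(S : {set 'I_n} | #|S| == k) (f S)%:R) / ('C(n, k))%:R.

(* Main.v *)
From Stdlib Require Import Lia Psatz.
Require Import Defs.
From HB Require Import structures.
From mathcomp Require Import all_boot all_order all_algebra.
Import Order.TTheory GRing.Theory Num.Theory.
Set Implicit Arguments. Unset Strict Implicit. Unset Printing Implicit Defensive.
Local Open Scope ring_scope.
Local Open Scope ring_scope.

Section Lin.
Variables (F : fieldType) (m n : nat) (B : 'M[F]_(n, m)).

Definition V (S : {set 'I_n}) : 'M[F]_m := (\sum_(j in S) <<row j B>>)%MS.

Lemma colsubset_tr (S : {set 'I_n}) :
  ((colsubset B^T S)^T :=: V S)%MS.
Proof.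
have -> : (colsubset B^T S)^T = rowsub (fun j : 'I_#|S| => enum_val j) B.
  by apply/matrixP => i j; rewrite !mxE.
rewrite /V (big_enum_val (fun j => <<row j B>>%MS)) /=.
apply/eqmxP/andP; split.
  apply/row_subP => i; rewrite row_rowsub.
  by rewrite (sumsmx_sup i) // genmxE.
apply/sumsmx_subP => i _; rewrite genmxE -row_rowsub; exact: row_sub.
Qed.

Lemma VsubS (S T : {set 'I_n}) : S \subset T -> (V S <= V T)%MS.
Proof.
move=> sST; apply/sumsmx_subP => i iS.
by rewrite (sumsmx_sup i) ?(subsetP sST).
Qed.

Lemma VD1 (T : {set 'I_n}) i : i \in T -> (V T :=: row i B + V (T :\ i))%MS.
Proof.
move=> iT; rewrite /V (big_setD1 i iT) /=.
apply: adds_eqmx; first exact: genmxE.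
by apply: eqmx_sums => j; rewrite !inE.
Qed.

Lemma rank_lt_adds (p : nat) (v : 'M[F]_(p, m)) (U : 'M[F]_m) :
  ~~ (v <= U)%MS -> (\rank U < \rank (v + U)%MS)%N.
Proof.
move=> nvU; have : (U < v + U)%MS.
  rewrite ltmxE addsmxSr /=; apply: contra nvU => h.
  exact: submx_trans (addsmxSl _ _) h.
by rewrite ltmxErank => /andP[].
Qed.

Lemma rank_step (T : {set 'I_n}) i : i \in T ->
  (\rank (V T) + (row i B <= V (T :\ i))%MS <= \rank (V (T :\ i)) + 1)%N.
Proof.
move=> iT; rewrite (VD1 iT).
case: (boolP (row i B <= V (T :\ i))%MS) => h /=.
  rewrite addn1 addn1 ltnS; apply: mxrankS.
  by rewrite addsmx_sub h submx_refl.
rewrite addn0 addnC; apply: leq_trans (mxrank_adds_leqif _ _) _.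
by rewrite leq_add2r rank_leq_row.
Qed.

Lemma ess_bound (T X : {set 'I_n}) : X \subset T ->
  {in X, forall i, ~~ (row i B <= V (T :\ i))%MS} -> (#|X| <= \rank (V X))%N.
Proof.
move: {2}#|X| (leqnn #|X|) => c; elim: c X => [|c IH] X hc sXT hX.
  by rewrite leqn0 in hc; rewrite (eqP hc).
have [X0|[i iX]] := set_0Vmem X; first by rewrite X0 cards0.
have sX'T : X :\ i \subset T :\ i by apply: setSD.
have h1 : (#|X :\ i| <= \rank (V (X :\ i)))%N.
  apply: IH; first by rewrite -ltnS (cardsD1 i X) iX in hc.
    exact: subset_trans (subsetDl _ _) sXT.
  by move=> j /setD1P[_ /hX].
rewrite (cardsD1 i X) iX (VD1 iX) add1n.
apply: leq_trans (rank_lt_adds _); first by rewrite ltnS.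
apply: contra (hX i iX) => h; apply: submx_trans h _; exact: VsubS.
Qed.


Lemma sum_bool (I : finType) (P Q : pred I) :
  (\sum_(i | P i) (Q i : nat))%N = #|[set i | P i && Q i]|.
Proof.
rewrite -sum1dep_card big_mkcondr /=; apply: eq_bigr => i _.
by case: (Q i).
Qed.

Lemma arith k N e r s : (e + N = k.+1 -> e <= r ->
  k.+1 * r + N <= s + k.+1 -> k.+1 * k <= k * N + s)%N.
Proof.
move=> /eqP; rewrite eqn_leq => /andP[/ssrnat.leP h1 /ssrnat.leP h2] /ssrnat.leP h3 /ssrnat.leP h4; apply/ssrnat.leP.
rewrite -!multE -!plusE in h1 h2 h3 h4 *. nia.
Qed.

Lemma perT (T : {set 'I_n}) k : #|T| = k.+1 ->
 (k.+1 * k <= \sum_(i in T) (k * (row i B <= V (T:\i))%MS + \rank (V (T :\ i))))%N.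
Proof.
move=> cT.
set N := #|[set i | (i \in T) && (row i B <= V (T:\i))%MS]|.
set X := [set i | (i \in T) && ~~ (row i B <= V (T:\i))%MS].
have hN : (\sum_(i in T) (row i B <= V (T:\i))%MS : nat)%N = N by rewrite sum_bool.
have heN : (#|X| + N = k.+1)%N.
  rewrite -cT -(cardsID [set i | (row i B <= V (T:\i))%MS] T) addnC.
  congr (_ + _)%N; apply: eq_card => i; rewrite !inE //.
  by rewrite andbC.
have hXr : (#|X| <= \rank (V T))%N.
  apply: leq_trans (ess_bound (T := T) _ _) _.
  - by apply/subsetP => i; rewrite inE => /andP[].
  - by move=> i; rewrite inE => /andP[].
  - by apply: mxrankS; apply: VsubS; apply/subsetP => i; rewrite inE => /andP[].
have hs : (k.+1 * \rank (V T) + N <= \sum_(i in T) \rank (V (T :\ i)) + k.+1)%N.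
  have e1 : (\sum_(i in T) (\rank (V T) + (row i B <= V (T:\i))%MS) = k.+1 * \rank (V T) + N)%N.
    by rewrite big_split /= sum_nat_const cT hN.
  have e2 : (\sum_(i in T) (\rank (V (T :\ i)) + 1) = \sum_(i in T) \rank (V (T :\ i)) + k.+1)%N.
    by rewrite big_split /= sum1_card cT.
  rewrite -e1 -e2; apply: leq_sum => i iT; exact: rank_step.
rewrite big_split /= -big_distrr /= hN.
exact: arith heN hXr hs.
Qed.

End Lin.

Lemma reidx n k (G : {set 'I_n} -> 'I_n -> nat) :
 (\sum_(S : {set 'I_n} | #|S| == k) \sum_(i | i \notin S) G S i =
  \sum_(T : {set 'I_n} | #|T| == k.+1) \sum_(i in T) G (T :\ i) i)%N.
Proof.
rewrite !pair_big_dep /=.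
rewrite (reindex_onto (fun q : {set 'I_n} * 'I_n => (q.1 :\ q.2, q.2))
                      (fun p : {set 'I_n} * 'I_n => (p.2 |: p.1, p.2))) /=.
  apply: eq_bigl => [[T i]] /=.
  rewrite !inE eqxx /= andbT.
  case iT: (i \in T).
    by rewrite setD1K // eqxx !andbT (cardsD1 i T) iT add1n eqSS.
  by rewrite andbF; apply/andP => -[_ /eqP [hT]]; rewrite -hT setU11 in iT.
by move=> [S i] /= /andP[_ iS]; rewrite setU1K.
Qed.
Lemma fin (F : realFieldType) (t r c K N : F) : 0 < c -> 0 < K ->
  K * (N - K) * c <= K * t + (N - K) * r -> (N / K - 1) * (K - r / c) <= t / c.
Proof.
move=> c0 K0 h.
rewrite ler_pdivlMr // -mulrA.
have -> : (K - r / c) * c = K * c - r by rewrite mulrBl divfK ?gt_eqF.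
have -> : N / K - 1 = (N - K) / K by rewrite mulrBl divff ?gt_eqF.
rewrite mulrAC ler_pdivrMr // mulrBr lerBlDr.
by rewrite [t * K]mulrC mulrA [(N - K) * K]mulrC.
Qed.
Theorem lemma3 (R : realFieldType) (m n k : nat) (A : 'M[R]_(m, n))
  (hk1 : (1 <= k)%N) (hkn : (k < n)%N) :
  expect_ksub R k (t_S A) >=
    (n%:R / k%:R - 1) * (k%:R - expect_ksub R k (r_S A)).
Proof.
set B := A^T.
have hc : forall S, ((colsubset A S)^T :=: V B S)%MS.
  by move=> S; have := colsubset_tr B S; rewrite /B trmxK.
have hr : forall S, r_S A S = \rank (V B S).
  by move=> S; rewrite /r_S -mxrank_tr (hc S).
have ht : forall S, t_S A S = (\sum_(i | i \notin S) (row i B <= V B S)%MS : nat)%N.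
  move=> S; rewrite sum_bool /t_S; apply: eq_card => i; rewrite !inE /in_colspace.
  by rewrite tr_col (hc S).
set Ts := (\sum_(S : {set 'I_n} | #|S| == k) t_S A S)%N.
set Rs := (\sum_(S : {set 'I_n} | #|S| == k) r_S A S)%N.
have key : (k * (n - k) * 'C(n, k) <= k * Ts + (n - k) * Rs)%N.
  have e1 : (k * Ts + (n - k) * Rs = \sum_(S : {set 'I_n} | #|S| == k)
      \sum_(i | i \notin S) (k * (row i B <= V B S)%MS + \rank (V B S)))%N.
    rewrite /Ts /Rs !big_distrr -big_split /=; apply: eq_bigr => S /eqP cS.
    rewrite big_split /= -big_distrr /= -ht sum_nat_cond_const hr.
    congr (_ + _)%N; congr (_ * _)%N.
    have -> : [set i | i \notin S] = ~: S by apply/setP => i; rewrite !inE.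
    by rewrite cardsCs setCK card_ord cS.
  rewrite e1 reidx /=.
  have H := leq_sum (index_enum _) (fun (T : {set 'I_n}) (hT : #|T| == k.+1) => perT B (eqP hT)).
  apply: leq_trans _ H.
  rewrite (sum_nat_cond_const (fun S : {set 'I_n} => #|S| == k.+1)) card_draws card_ord.
  by rewrite mulnA [('C(n, k.+1) * k.+1)%N]mulnC mul_bin_left [leqRHS]mulnC mulnA.
rewrite /expect_ksub -!natr_sum -/Ts -/Rs.
apply: fin; first by rewrite ltr0n bin_gt0 ltnW.
  by rewrite ltr0n.
move: key; rewrite -(ler_nat R) !natrD !natrM natrB ?(ltnW hkn) //.
Qed.
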